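(* Consider $m$ agents $i=1,\ldots,m$ with data and weight matrix $W$ as described in the context. Fix $\hat{\delta}>0$, an integer $T\ge1$, and a time $t\ge\max(t_1,t_2,t_3)$, where $t_1=8n+16\log\frac{2}{\hat\delta}$, $t_2=\left(\frac{16\hat{\mu}(\sqrt{4n}+\sqrt{2\log\frac{2}{\hat\delta}})}{\sigma_x}\right)^2$, $t_3=2(n+l)\log\frac{1}{\hat\delta}$. On the event $E_3$ defined in the context, for all $i\in\{1,\ldots,m\}$, $$\|\alpha^T_{i,t+1}-\bar\alpha_{t+1}\|\le m^{3/2}\sqrt{l}\,(\rho(W))^T\,(tc_1+\sqrt t\,c_2),$$ where $c_1=\|\Theta\|\big(\frac{19}{8}\sigma_x^2+\hat{\mu}^2\big)$ and $c_2=\sigma_\eta\Big(4\sigma_x\sqrt{(n+l)\log\frac{9}{\hat\delta}}+\hat{\mu}\big(\sqrt{2(l+n)}+\sqrt{2\log\frac{2}{\hat\delta}}\big)\Big)$.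
   Context: Data model: each agent $i\in\{1,\dots,m\}$ observes at times $j=1,2,\ldots$ pairs $(x_{i,j},y_{i,j})$ with $y_{i,j}=\Theta x_{i,j}+\eta_{i,j}$, $\Theta\in\mathbb{R}^{l\times n}$ unknown, $x_{i,j}\sim\mathcal{N}(\mu_{i,j},\sigma_x^2I_n)$, $\eta_{i,j}\sim\mathcal{N}(0,\sigma_\eta^2I_l)$, all mutually independent over time and agents, with deterministic means and $\sup_{i,j}\|\mu_{i,j}\|=\hat\mu<\infty$; $\sigma_x,\sigma_\eta>0$. The agents communicate over an undirected connected graph; $W\in\mathbb{R}^{m\times m}$ satisfies: $W(i,j)\ge0$, $W(i,j)=0$ if $j$ is not a neighbor of $i$ and $i\ne j$, $W\mathbf 1_m=\mathbf 1_m$, $W=W^*$, and $\rho(W)=\max\{\lambda_2(W),-\lambda_m(W)\}<1$, where $\lambda_1(W)\ge\lambda_2(W)\ge\cdots\ge\lambda_m(W)$ are the (real) eigenvalues of $W$. Define $\alpha_{i,t+1}=\sum_{j=1}^ty_{i,j}x_{i,j}^*$, $\bar\alpha_{t+1}=\frac1m\sum_{i=1}^m\alpha_{i,t+1}$, and the communicated quantities $\alpha^0_{i,t+1}=\alpha_{i,t+1}$, $\alpha^{k+1}_{i,t+1}=\sum_{j=1}^m W(i,j)\alpha^k_{j,t+1}$ for $k=0,\ldots,T-1$. Let $\bar{\mu}_{i,t}=\frac{4}{t\sigma_x^2}\sum_{j=1}^t\mu_{i,j}\mu_{i,j}^*$. The event $E_3$ is the intersection over all $i$ of $\{\|\sum_{j=1}^tx_{i,j}x_{i,j}^*\|\le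 t(\frac{19}{8}\sigma_x^2+\hat\mu^2)\}$, $\{\lambda_{\min}(\sum_{j=1}^tx_{i,j}x_{i,j}^* )\ge\frac{t\sigma_x^2}{8}\lambda_{\min}(I_n+\bar\mu_{i,t})\}$, and $\{\|\sum_{j=1}^t\eta_{i,j}x_{i,j}^*\|\le\sqrt t\,\sigma_\eta(4\sigma_x\sqrt{(n+l)\log\frac9{\hat\delta}}+\hat\mu(\sqrt{2(l+n)}+\sqrt{2\log\frac2{\hat\delta}}))\}$. $\|\cdot\|$ is the spectral norm, $A^*$ the transpose. *)

(* Defs.v *)
From HB Require Import structures.
From mathcomp Require Import all_boot all_order all_algebra.
From mathcomp Require Import all_classical all_reals all_analysis.
Set Implicit Arguments. Unset Strict Implicit. Unset Printing Implicit Defensive.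
Import Order.TTheory GRing.Theory Num.Theory.
Local Open Scope classical_set_scope.
Local Open Scope ring_scope.

Section Defs.
Variable R : realType.

Definition vnorm (p : nat) (v : 'cV[R]_p) : R := Num.sqrt (\sum_(i < p) v i 0 ^+ 2).

Definition specnorm (p q : nat) (A : 'M[R]_(p, q)) : R :=
  sup [set vnorm (A *m v) | v in [set v : 'cV[R]_q | vnorm v <= 1]].

Definition lambda_min (p : nat) (A : 'M[R]_p) : R :=
  inf [set a : R | eigenvalue A a].

(* eigenvalues of W listed with multiplicity in nonincreasing order:
   lam = [:: lambda_1; ...; lambda_m] *)
Definition ordered_eigs (m : nat) (W : 'M[R]_m) (lam : seq R) : Prop :=
  [/\ size lam = m, sorted (fun a b : R => b <= a) lam &
      char_poly W = \prod_(a <- lam) ('X - a%:P)].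

Definition rhoW (m : nat) (lam : seq R) : R :=
  Num.max (nth 0 lam 1) (- nth 0 lam m.-1).

Fixpoint consensus (m l n : nat) (W : 'M[R]_m) (alpha : 'I_m -> 'M[R]_(l, n))
  (k : nat) : 'I_m -> 'M[R]_(l, n) :=
  match k with
  | 0 => alpha
  | k'.+1 => fun i => \sum_(j < m) W i j *: consensus W alpha k' j
  end.

End Defs.

(* Main.v *)
Require Import Defs.
From HB Require Import structures.
From mathcomp Require Import all_boot all_order all_algebra.
From mathcomp Require Import all_classical all_reals all_analysis.
From mathcomp Require Import complex.
From mathcomp Require Import ring lra.
Import Order.TTheory GRing.Theory Num.Theory.
Local Open Scope classical_set_scope.
Local Open Scope ring_scope.
Set Implicit Arguments. Unset Strict Implicit.

Lemma vnorm_ge0 (R : realType) p (v : 'cV[R]_p) : 0 <= vnorm v.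
Proof. exact: sqrtr_ge0. Qed.

Lemma sumsq_ge0 (R : realType) p (F : 'I_p -> R) : 0 <= \sum_(i < p) F i ^+ 2.
Proof. by apply: sumr_ge0 => i _; exact: sqr_ge0. Qed.

Lemma vnorm_sq (R : realType) p (v : 'cV[R]_p) :
  vnorm v ^+ 2 = \sum_(i < p) v i 0 ^+ 2.
Proof. by rewrite /vnorm sqr_sqrtr // sumsq_ge0. Qed.

Lemma le_sqrt_sq (R : realType) (a b : R) : 0 <= b -> a ^+ 2 <= b ^+ 2 -> Num.sqrt (a ^+ 2) <= b.
Proof.
move=> b0 h; rewrite -(ger0_norm b0) -!sqrtr_sqr ler_sqrt //; exact: sqr_ge0.
Qed.

Lemma vnorm_le (R : realType) p (v : 'cV[R]_p) (c : R) :
  0 <= c -> \sum_(i < p) v i 0 ^+ 2 <= c ^+ 2 -> vnorm v <= c.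
Proof.
move=> c0 h; rewrite /vnorm -(ger0_norm c0) -sqrtr_sqr ler_sqrt //; exact: sqr_ge0.
Qed.

Lemma abs_le_vnorm (R : realType) p (v : 'cV[R]_p) i : `|v i 0| <= vnorm v.
Proof.
rewrite -sqrtr_sqr ler_sqrt ?sumsq_ge0 // (bigD1 i) //= lerDl.
by apply: sumr_ge0 => j _; exact: sqr_ge0.
Qed.

Lemma vnormZ (R : realType) p (c : R) (v : 'cV[R]_p) : vnorm (c *: v) = `|c| * vnorm v.
Proof.
rewrite /vnorm -sqrtr_sqr -sqrtrM ?sqr_ge0 // mulr_sumr; congr Num.sqrt.
by apply: eq_bigr => i _; rewrite mxE exprMn.
Qed.

Lemma vnorm0 (R : realType) p : vnorm (0 : 'cV[R]_p) = 0.
Proof. by rewrite /vnorm big1 ?sqrtr0 // => i _; rewrite mxE expr0n. Qed.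

(* Cauchy-Schwarz via Lagrange *)
Lemma CS (R : realType) p (a b : 'I_p -> R) :
  (\sum_i a i * b i) ^+ 2 <= (\sum_i a i ^+ 2) * (\sum_i b i ^+ 2).
Proof.
have H : 0 <= \sum_i \sum_j (a i * b j - a j * b i) ^+ 2.
  by apply: sumr_ge0 => i _; apply: sumr_ge0 => j _; exact: sqr_ge0.
have E : \sum_i \sum_j (a i * b j - a j * b i) ^+ 2 =
   2 * ((\sum_i a i ^+ 2) * (\sum_i b i ^+ 2) - (\sum_i a i * b i) ^+ 2).
  have E1 : forall i j, (a i * b j - a j * b i) ^+ 2 =
     a i ^+ 2 * b j ^+ 2 + a j ^+ 2 * b i ^+ 2 - 2 * ((a i * b i) * (a j * b j)).
    by move=> i j; ring.
  under eq_bigr do under eq_bigr do rewrite E1.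
  under eq_bigr do rewrite sumrB big_split /=.
  rewrite sumrB big_split /=.
  under [X in X + _ - _]eq_bigr do rewrite -mulr_sumr.
  rewrite -mulr_suml.
  have -> : \sum_i \sum_j a j ^+ 2 * b i ^+ 2 = (\sum_i a i ^+ 2) * (\sum_i b i ^+ 2).
    by rewrite mulrC mulr_suml; apply: eq_bigr => i _; rewrite mulr_sumr;
       apply: eq_bigr => j _; rewrite mulrC.
  rewrite expr2 mulr_suml.
  have -> : \sum_i \sum_j 2 * (a i * b i * (a j * b j)) =
            2 * \sum_i (a i * b i * \sum_j a j * b j).
    by rewrite mulr_sumr; apply: eq_bigr => i _; rewrite !mulr_sumr.
  set S := (\sum_j a j * b j); rewrite -(mulr_suml _ _ (fun i => a i * b i) S) /S; ring.
rewrite E in H; rewrite -subr_ge0; move: H; rewrite pmulr_rge0 //.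
Qed.

Lemma vnormD (R : realType) p (u v : 'cV[R]_p) : vnorm (u + v) <= vnorm u + vnorm v.
Proof.
apply: vnorm_le; first by rewrite addr_ge0 ?vnorm_ge0.
have -> : \sum_(i < p) (u + v) i 0 ^+ 2 =
  \sum_i u i 0 ^+ 2 + \sum_i v i 0 ^+ 2 + 2 * \sum_i u i 0 * v i 0.
  rewrite mulr_sumr -!big_split /=; apply: eq_bigr => i _; rewrite mxE; ring.
have h1 : \sum_i u i 0 * v i 0 <= vnorm u * vnorm v.
  have := CS (fun i => u i 0) (fun i => v i 0); rewrite -!vnorm_sq -exprMn => h.
  apply: le_trans (ler_norm _) _.
  by rewrite -sqrtr_sqr; apply: le_sqrt_sq => //; rewrite mulr_ge0 ?vnorm_ge0.
rewrite sqrrD -!vnorm_sq; lra.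
Qed.

Lemma sq_le (R : realType) (x b : R) : `|x| <= b -> x ^+ 2 <= b ^+ 2.
Proof.
move=> h; have b0 : 0 <= b by exact: le_trans (normr_ge0 _) h.
rewrite -[x ^+ 2]ger0_norm ?sqr_ge0 // normrX !expr2.
by apply: ler_pM => //; exact: normr_ge0.
Qed.

Definition Bd (R : realType) p q (A : 'M[R]_(p, q)) :=
  Num.sqrt (\sum_(i < p) (\sum_(j < q) `|A i j|) ^+ 2).

Lemma vnorm_Bd (R : realType) p q (A : 'M[R]_(p, q)) v :
  vnorm v <= 1 -> vnorm (A *m v) <= Bd A.
Proof.
move=> hv; rewrite /vnorm /Bd ler_sqrt ?sumsq_ge0 //.
apply: ler_sum => i _; apply: sq_le; rewrite mxE.
apply: le_trans (ler_norm_sum _ _ _) _; apply: ler_sum => j _.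
rewrite normrM; apply: ler_piMr; first exact: normr_ge0.
exact: le_trans (abs_le_vnorm _ _) hv.
Qed.

Definition Sset (R : realType) p q (A : 'M[R]_(p, q)) :=
  [set vnorm (A *m v) | v in [set v : 'cV[R]_q | vnorm v <= 1]].

Lemma specnormE (R : realType) p q (A : 'M[R]_(p, q)) : specnorm A = sup (Sset A).
Proof. by []. Qed.

Lemma Sset_n0 (R : realType) p q (A : 'M[R]_(p, q)) : Sset A !=set0.
Proof. by exists (vnorm (A *m 0)); exists 0 => //=; rewrite vnorm0 ler01. Qed.

Lemma Sset_ub (R : realType) p q (A : 'M[R]_(p, q)) : has_ubound (Sset A).
Proof. by exists (Bd A) => _ [v hv <-]; exact: vnorm_Bd. Qed.

Lemma specnorm_le (R : realType) p q (A : 'M[R]_(p, q)) K :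
  (forall v : 'cV[R]_q, vnorm v <= 1 -> vnorm (A *m v) <= K) -> specnorm A <= K.
Proof. by move=> h; apply: ge_sup; [exact: Sset_n0 | move=> _ [v hv <-]; exact: h]. Qed.

Lemma specnorm_ge (R : realType) p q (A : 'M[R]_(p, q)) v :
  vnorm v <= 1 -> vnorm (A *m v) <= specnorm A.
Proof. by move=> hv; apply: (ub_le_sup (Sset_ub A)); exists v. Qed.

Lemma specnorm_ge0 (R : realType) p q (A : 'M[R]_(p, q)) : 0 <= specnorm A.
Proof. by apply: le_trans (vnorm_ge0 _) (specnorm_ge A (v := 0) _); rewrite vnorm0 ler01. Qed.

Lemma specnorm_Bd (R : realType) p q (A : 'M[R]_(p, q)) : specnorm A <= Bd A.
Proof. by apply: specnorm_le => v; exact: vnorm_Bd. Qed.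

Lemma specnorm_vec (R : realType) p q (A : 'M[R]_(p, q)) v :
  vnorm (A *m v) <= specnorm A * vnorm v.
Proof.
have [v0|vn0] := eqVneq (vnorm v) 0.
  have -> : v = 0.
    apply/matrixP => i j; rewrite ord1 mxE; apply/eqP; rewrite -normr_eq0.
    by rewrite eq_le normr_ge0 andbT -v0 abs_le_vnorm.
  by rewrite mulmx0 vnorm0 mulr_ge0 ?specnorm_ge0 ?vnorm_ge0.
have vp : 0 < vnorm v by rewrite lt_def vn0 vnorm_ge0.
have := specnorm_ge A (v := (vnorm v)^-1 *: v).
rewrite vnormZ ger0_norm ?invr_ge0 ?vnorm_ge0 // mulVf // lexx => /(_ isT).
rewrite -scalemxAr vnormZ ger0_norm ?invr_ge0 ?vnorm_ge0 //.
by rewrite mulrC ler_pdivrMr //.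
Qed.

Lemma specnormD (R : realType) p q (A B : 'M[R]_(p, q)) :
  specnorm (A + B) <= specnorm A + specnorm B.
Proof.
apply: specnorm_le => v hv; rewrite mulmxDl.
apply: le_trans (vnormD _ _) _; apply: lerD.
  by apply: le_trans (specnorm_vec _ _) _; rewrite ler_piMr ?specnorm_ge0.
by apply: le_trans (specnorm_vec _ _) _; rewrite ler_piMr ?specnorm_ge0.
Qed.

Lemma specnormZ (R : realType) p q (c : R) (A : 'M[R]_(p, q)) :
  specnorm (c *: A) <= `|c| * specnorm A.
Proof.
apply: specnorm_le => v hv; rewrite -scalemxAl vnormZ ler_wpM2l ?normr_ge0 //.
exact: specnorm_ge.
Qed.

Lemma specnormM (R : realType) p q r (A : 'M[R]_(p, q)) (B : 'M[R]_(q, r)) :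
  specnorm (A *m B) <= specnorm A * specnorm B.
Proof.
apply: specnorm_le => v hv; rewrite -mulmxA.
apply: le_trans (specnorm_vec _ _) _; rewrite ler_wpM2l ?specnorm_ge0 //.
exact: specnorm_ge.
Qed.

Lemma specnorm_sum (R : realType) p q (I : finType) (F : I -> 'M[R]_(p, q)) :
  specnorm (\sum_i F i) <= \sum_i specnorm (F i).
Proof.
apply: (big_ind2 (fun A b => specnorm A <= b)).
- by apply: specnorm_le => v _; rewrite mul0mx vnorm0.
- by move=> A a B b ha hb; apply: le_trans (specnormD _ _) (lerD ha hb).
- by [].
Qed.

Fixpoint powm (R : realType) m (W : 'M[R]_m) k : 'M[R]_m :=
  match k with 0 => 1%:M | k'.+1 => W *m powm W k' end.

Lemma consensusE (R : realType) m l n (W : 'M[R]_m) (alpha : 'I_m -> 'M[R]_(l, n)) k i :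
  consensus W alpha k i = \sum_j powm W k i j *: alpha j.
Proof.
elim: k i => [|k IH] i /=.
  rewrite (bigD1 i) //= big1 ?addr0; first by rewrite mxE eqxx scale1r.
  by move=> j /negPf ji; rewrite mxE eq_sym ji scale0r.
under eq_bigr do rewrite IH scaler_sumr.
rewrite exchange_big /=; apply: eq_bigr => j _.
by rewrite mxE scaler_suml; apply: eq_bigr => k' _; rewrite scalerA.
Qed.

Lemma powm_const (R : realType) m (W : 'M[R]_m) k :
  W *m (const_mx 1 : 'cV[R]_m) = const_mx 1 ->
  powm W k *m (const_mx 1 : 'cV[R]_m) = const_mx 1.
Proof. by move=> h; elim: k => [|k IH] /=; rewrite ?mul1mx // -mulmxA IH h. Qed.

Lemma sum_Wv (R : realType) m (W : 'M[R]_m) (w : 'cV[R]_m) :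
  W *m (const_mx 1 : 'cV[R]_m) = const_mx 1 -> W^T = W ->
  \sum_k (W *m w) k 0 = \sum_k w k 0.
Proof.
move=> h1 hT.
have E : forall (u : 'cV[R]_m), \sum_k u k 0 = ((const_mx 1 : 'rV[R]_m) *m u) 0 0.
  by move=> u; rewrite mxE; apply: eq_bigr => k _; rewrite mxE mul1r.
have h2 : (const_mx 1 : 'rV[R]_m) *m W = const_mx 1.
  apply: trmx_inj; rewrite trmx_mul hT.
  have -> : (const_mx 1 : 'rV[R]_m)^T = const_mx 1 by apply/matrixP => a b; rewrite !mxE.
  by rewrite h1; apply/matrixP => a b; rewrite !mxE.
by rewrite !E mulmxA h2.
Qed.

Lemma powm_contract (R : realType) m (W : 'M[R]_m) (rho : R) :
  W *m (const_mx 1 : 'cV[R]_m) = const_mx 1 -> W^T = W -> 0 <= rho ->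
  (forall w : 'cV[R]_m, \sum_k w k 0 = 0 -> vnorm (W *m w) <= rho * vnorm w) ->
  forall k (w : 'cV[R]_m), \sum_k w k 0 = 0 -> vnorm (powm W k *m w) <= rho ^+ k * vnorm w.
Proof.
move=> h1 hT r0 hc; elim => [|k IH] w hw /=; first by rewrite mul1mx expr0 mul1r.
rewrite -mulmxA; apply: le_trans (hc _ _) _.
  by elim: k {IH} => [|k IHk] /=; rewrite ?mul1mx // -mulmxA sum_Wv.
by rewrite exprS -mulrA ler_wpM2l // IH.
Qed.

Lemma entry_bound (R : realType) m (W : 'M[R]_m) (rho : R) k (i j : 'I_m) :
  W *m (const_mx 1 : 'cV[R]_m) = const_mx 1 -> W^T = W -> 0 <= rho ->
  (forall w : 'cV[R]_m, \sum_k w k 0 = 0 -> vnorm (W *m w) <= rho * vnorm w) ->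
  `|powm W k i j - (m%:R)^-1| <= rho ^+ k.
Proof.
move=> h1 hT r0 hc.
have m0 : (0 < m)%N by case: i => a; case: m {W h1 hT hc j} => // ? _.

have mR : (m%:R : R) != 0 by rewrite pnatr_eq0 -lt0n.
pose c : R := (m%:R)^-1.
pose w : 'cV[R]_m := \col_k ((k == j)%:R - c).
have Ew : powm W k i j - c = (powm W k *m w) i 0.
  rewrite mxE.
  under eq_bigr do rewrite mxE mulrBr.
  rewrite sumrB (bigD1 j) //= eqxx mulr1 big1 ?addr0; last first.
    by move=> a /negPf ->; rewrite mulr0.
  rewrite -mulr_suml.
  have := congr1 (fun M : 'M[R]_(m,1) => M i 0) (powm_const k h1); rewrite !mxE.
  under eq_bigr do rewrite mxE mulr1.
  move=> ->.
  by rewrite mul1r.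
have sw : \sum_k w k 0 = 0.
  under eq_bigr do rewrite mxE.
  rewrite sumrB sumr_const card_ord -[_ *+ m]mulr_natl /c mulfV //.
  rewrite (bigD1 j) //= eqxx big1 ?addr0 ?subrr // => a /negPf ->; by [].
have nw : vnorm w <= 1.
  apply: vnorm_le => //; rewrite expr1n.
  have E : forall a : 'I_m, w a 0 ^+ 2 = (a == j)%:R * (1 - 2 * c) + c ^+ 2.
    by move=> a; rewrite mxE; case: (a == j) => /=; ring.
  under eq_bigr do rewrite E.
  rewrite big_split /= -mulr_suml sumr_const card_ord -[_ *+ m]mulr_natl.
  rewrite (bigD1 j) //= eqxx big1 ?addr0; last by move=> a /negPf ->.
  have cm : m%:R * c ^+ 2 = c by rewrite /c expr2 mulrA mulfV // mul1r.
  rewrite cm mul1r.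
  have c0 : 0 <= c by rewrite /c invr_ge0 ler0n.
  lra.
rewrite Ew; apply: le_trans (abs_le_vnorm _ _) _.
apply: le_trans (powm_contract h1 hT r0 hc k sw) _.
by rewrite ler_piMr // exprn_ge0.
Qed.

Lemma lam_nth (R : realType) (lam : seq R) i j :
  sorted (fun a b : R => b <= a) lam -> (i <= j)%N -> (j < size lam)%N ->
  nth 0 lam j <= nth 0 lam i.
Proof.
move=> s ij js.
have tr : transitive (fun a b : R => b <= a).
  by move=> a b c /= h1 h2; exact: le_trans h2 h1.
have rf : reflexive (fun a b : R => b <= a) by move=> a /=.
apply: (@sorted_leq_nth R (fun a b : R => b <= a) tr rf 0 lam s i j) => //.
by rewrite inE (leq_ltn_trans ij js).
Qed.

Lemma rho_ge0 (R : realType) m (W : 'M[R]_m) lam : ordered_eigs W lam -> 0 <= rhoW m lam.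
Proof.
case=> sz s _; rewrite /rhoW.
case: (leqP m 1) => hm.
  by rewrite nth_default ?sz // le_max lexx.
have h : nth 0 lam m.-1 <= nth 0 lam 1.
  apply: lam_nth => //; rewrite ?sz; case: (m) hm => [|[|]] //.
rewrite le_max; case: (leP 0 (nth 0 lam 1)) => // h1 /=.
rewrite oppr_ge0; exact: le_trans h (ltW h1).
Qed.

Lemma lam_bound (R : realType) m (W : 'M[R]_m) lam a :
  ordered_eigs W lam -> a \in lam -> a != nth 0 lam 0 ->
  `|a| <= rhoW m lam.
Proof.
case=> sz s _ /(nthP 0) [k kl <-] hk.
have k0 : (0 < k)%N by case: k {kl} hk => //; rewrite eqxx.
rewrite /rhoW sz in kl *; rewrite le_max.
have h2 : nth 0 lam k <= nth 0 lam 1 by apply: lam_nth; rewrite ?sz.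
have h3 : nth 0 lam m.-1 <= nth 0 lam k.
  apply: lam_nth => //; first by rewrite -ltnS prednK // (leq_trans _ kl).
  by rewrite sz prednK // (leq_trans _ kl).
case: (lerP 0 (nth 0 lam k)) => hs.
  by rewrite ger0_norm // h2.
by rewrite ltr0_norm // lerN2 h3 orbT.
Qed.

Lemma lam_le_rho (R : realType) m (W : 'M[R]_m) lam k :
  ordered_eigs W lam -> (0 < k)%N -> (k < m)%N -> nth 0 lam k <= rhoW m lam.
Proof.
move=> [sz s _] k0 km; rewrite /rhoW le_max; apply/orP; left.
by apply: lam_nth; rewrite ?sz.
Qed.

Lemma lam_head (R : realType) m (W : 'M[R]_m) lam :
  ordered_eigs W lam -> rhoW m lam < 1 -> (1 : R) \in lam -> nth 0 lam 0 = 1.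
Proof.
move=> he hr h1; apply/eqP; rewrite eq_sym; apply/negPn/negP => hn.
have := lam_bound he h1 hn; rewrite normr1 => h.
by move: (lt_le_trans hr h); rewrite ltxx.
Qed.

Lemma lam_count (R : realType) m (W : 'M[R]_m) lam :
  ordered_eigs W lam -> rhoW m lam < 1 -> (1 : R) \in lam -> count_mem (1 : R) lam = 1%N.
Proof.
move=> he hr h1; have hh := lam_head he hr h1.
case: lam he hr h1 hh => [//|a rest] he hr _ /= ->; rewrite eqxx /=.
congr S; apply/count_memPn; apply/negP => /(nthP 0) [k kr hk].
have := @lam_le_rho R m W (a :: rest) k.+1 he isT.
case: he => sz _ _; rewrite /= in sz; rewrite -sz /= ltnS kr hk => /(_ isT) h.
by rewrite sz in h; move: (le_lt_trans h hr); rewrite ltxx.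
Qed.

Lemma char_poly_conj (F : fieldType) n (P A : 'M[F]_n) :
  P \in unitmx -> char_poly (invmx P *m A *m P) = char_poly A.
Proof.
move=> Pu.
pose Q := map_mx polyC P; pose Qi := map_mx polyC (invmx P).
have QQ : Qi *m Q = 1%:M by rewrite -map_mxM mulVmx // map_mx1.
have E : char_poly_mx (invmx P *m A *m P) = Qi *m char_poly_mx A *m Q.
  rewrite /char_poly_mx mulmxBr mulmxBl !map_mxM -/Q -/Qi.
  by rewrite mul_mx_scalar -scalemxAl QQ scalemx1.
by rewrite /char_poly E !det_mulmx mulrAC -det_mulmx QQ det1 mul1r.
Qed.

Local Open Scope sesquilinear_scope.

Definition hp (C : numClosedFieldType) m (u v : 'cV[C]_m) := \sum_k (u k 0)^* * v k 0.
Definition hn (C : numClosedFieldType) m (v : 'cV[C]_m) := \sum_k `|v k 0| ^+ 2.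

Lemma hpE (C : numClosedFieldType) m (u v : 'cV[C]_m) : hp u v = (u^t* *m v) 0 0.
Proof. by rewrite mxE; apply: eq_bigr => k _; rewrite !mxE. Qed.

Lemma hn_hp (C : numClosedFieldType) m (v : 'cV[C]_m) : hn v = hp v v.
Proof. by apply: eq_bigr => k _; rewrite normCKC. Qed.

Lemma hp_unit (C : numClosedFieldType) m (Q : 'M[C]_m) (u v : 'cV[C]_m) :
  Q^t* *m Q = 1%:M -> hp (Q *m u) (Q *m v) = hp u v.
Proof.
move=> QQ; rewrite !hpE trmx_mul map_mxM -mulmxA (mulmxA (Q^t*)) QQ mul1mx.
by [].
Qed.

Lemma conjCR (R : realType) (x : R) : (x%:C)%C^* = (x%:C)%C :> R[i].
Proof. exact: conjc_real. Qed.

Lemma hn_real (R : realType) m (v : 'cV[R]_m) :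
  hn (map_mx (real_complex R) v) = ((\sum_k v k 0 ^+ 2)%:C)%C.
Proof.
rewrite rmorph_sum; apply: eq_bigr => k _.
by rewrite mxE normCK conjCR -rmorphM expr2.
Qed.

Lemma spectral_contract (R : realType) m (W : 'M[R]_m) lam :
  W *m (const_mx 1 : 'cV[R]_m) = const_mx 1 -> W^T = W -> ordered_eigs W lam ->
  rhoW m lam < 1 ->
  forall w : 'cV[R]_m, \sum_k w k 0 = 0 -> vnorm (W *m w) <= rhoW m lam * vnorm w.
Proof.
move=> h1 hT he hr w hw.
have r0 := rho_ge0 he.
have h1row : (const_mx 1 : 'rV[R]_m) *m W = const_mx 1.
  apply: trmx_inj; rewrite trmx_mul hT.
  have -> : (const_mx 1 : 'rV[R]_m)^T = const_mx 1 by apply/matrixP => a b; rewrite !mxE.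
  by rewrite h1; apply/matrixP => a b; rewrite !mxE.
have one_in : 'I_m -> (1 : R) \in lam.
  move=> k.
  have : root (char_poly W) 1.
    rewrite -eigenvalue_root_char; apply/eigenvalueP; exists (const_mx 1).
      by rewrite h1row scale1r.
    by apply/eqP => /matrixP /(_ 0 k); rewrite !mxE => /eqP; rewrite oner_eq0.
  by case: he => _ _ ->; rewrite root_prod_XsubC.
pose Wc := map_mx (real_complex R) W.
have HWcT : Wc^t* = Wc.
  apply/matrixP => i j; rewrite !mxE conjCR.
  by have := congr1 (fun M : 'M[R]_m => M i j) hT; rewrite mxE => ->.
have Wn : Wc \is normalmx by apply/normalmxP; rewrite HWcT.
have HWc : Wc = invmx (spectralmx Wc) *m diag_mx (spectral_diag Wc) *m spectralmx Wc.
  exact/orthomx_spectralP.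
set P := spectralmx Wc in HWc; set d := spectral_diag Wc in HWc.
have PU : P \is unitarymx := spectral_unitarymx Wc.
have Pu : P \in unitmx := spectral_unit Wc.
have Pinv : invmx P = P^t* := invmx_unitary PU.
have PtP : P^t* *m P = 1%:M by rewrite -Pinv mulVmx.
have PPt : P *m P^t* = 1%:M by apply/unitarymxP.
have PW : P *m Wc = diag_mx d *m P by rewrite {1}HWc !mulmxA mulmxV // mul1mx.
have cpW : char_poly Wc = \prod_(a <- map (real_complex R) lam) ('X - a%:P).
  rewrite -map_char_poly; case: he => _ _ ->; rewrite rmorph_prod big_map.
  by apply: eq_bigr => a _; exact: map_polyXsubC.
have cpD : char_poly Wc = \prod_(x <- [seq d 0 k | k <- enum 'I_m]) ('X - x%:P).
  rewrite {1}HWc char_poly_conj // char_poly_trig ?diag_mx_is_trig // big_map big_enum /=.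
  by apply: eq_bigr => k _; rewrite mxE eqxx mulr1n.
have pe := prod_XsubC_eq (etrans (esym cpW) cpD).
have dlam : forall k, exists2 a, a \in lam & d 0 k = (a%:C)%C.
  move=> k; have : d 0 k \in map (real_complex R) lam.
    by rewrite (perm_mem pe) map_f ?mem_enum.
  by case/mapP => a al ->; exists a.
have duniq : forall k k', d 0 k = 1 -> d 0 k' = 1 -> k = k'.
  move=> k k' dk dk'.
  have c1 := lam_count he hr (one_in k).
  have : count_mem (1 : R[i]) [seq d 0 k | k <- enum 'I_m] = 1%N.
    rewrite -(permP pe) count_map -c1; apply: eq_count => a /=.
    by apply/eqP/eqP => [h|->]; [apply: complexI; rewrite h | rewrite rmorph1].
  rewrite count_map -size_filter => hc; apply/eqP; apply: contraT => kk'.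
  have : (size [:: k; k'] <= size (seq.filter (preim (fun k : 'I_m => d 0%R k) (pred1 (1%R : R[i]))) (enum 'I_m)))%N.
    apply: uniq_leq_size; first by rewrite /= inE andbT.
    by move=> a; rewrite !inE mem_filter mem_enum /= => /orP [] /eqP ->; rewrite ?dk ?dk' eqxx.
  by rewrite hc.
pose f := real_complex R.
pose wc := map_mx (real_complex R) w.
pose z := P *m wc.
pose onec : 'cV[R[i]]_m := const_mx 1.
have Wwc : map_mx (real_complex R) (W *m w) = P^t* *m (diag_mx d *m z).
  by rewrite map_mxM -/Wc {1}HWc Pinv /z !mulmxA.
have hn1 : hn (map_mx (real_complex R) (W *m w)) = hn (diag_mx d *m z).
  by rewrite Wwc !hn_hp hp_unit // trmxCK PPt.
have hn2 : hn z = hn wc by rewrite !hn_hp hp_unit.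
pose u := P *m onec.
have Wone : Wc *m onec = onec.
  have -> : onec = map_mx (real_complex R) (const_mx 1 : 'cV[R]_m).
    by apply/matrixP => a b; rewrite !mxE rmorph1.
  by rewrite -map_mxM h1.
have Du : diag_mx d *m u = u by rewrite /u mulmxA -PW -mulmxA Wone.
have uk : forall k, d 0 k != 1 -> u k 0 = 0.
  move=> k dk; have := congr1 (fun M : 'M[R[i]]_(m,1) => M k 0) Du.
  rewrite /= mul_diag_mx mxE => /eqP; rewrite -subr_eq0 -{2}[u k 0]mul1r -mulrBl mulf_eq0.
  by rewrite subr_eq0 (negPf dk) => /eqP.
have hpuz : hp u z = 0.
  rewrite /u /z hp_unit // /hp.
  have -> : \sum_k (onec k 0)^* * wc k 0 = ((\sum_k w k 0)%:C)%C.
    by rewrite rmorph_sum; apply: eq_bigr => k _; rewrite !mxE conjC1 mul1r.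
  by rewrite hw rmorph0.
have hnu : hn u = m%:R.
  rewrite hn_hp /u hp_unit // /hp.
  under eq_bigr do rewrite !mxE conjC1 mulr1.
  by rewrite sumr_const card_ord.
have zk : forall k, d 0 k = 1 -> z k 0 = 0.
  move=> k dk.
  have oth : forall j, j != k -> u j 0 = 0.
    by move=> j jk; apply: uk; apply: contra jk => /eqP dj; apply/eqP; exact: duniq.
  move: hpuz hnu; rewrite /hp hn_hp /hp (bigD1 k) //= big1 ?addr0; last first.
    by move=> j jk; rewrite oth // conjC0 mul0r.
  rewrite (bigD1 k) //= big1 ?addr0; last by move=> j jk; rewrite oth // mulr0.
  move=> /eqP; rewrite mulf_eq0 => /orP [|/eqP //].
  rewrite conjC_eq0 => /eqP u0; rewrite u0 mulr0 => /eqP.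
  have m0 : (0 < m)%N := leq_ltn_trans (leq0n k) (ltn_ord k).
  rewrite eq_sym pnatr_eq0.
  by move=> /eqP m00; exfalso; move: m0; rewrite m00 ltnn.
have bnd : hn (diag_mx d *m z) <= ((rhoW m lam ^+ 2)%:C)%C * hn z.
  rewrite /hn mulr_sumr; apply: ler_sum => k _.
  rewrite mul_diag_mx mxE normrM exprMn.
  have [dk|dk] := eqVneq (d 0 k) 1.
    by rewrite zk // normr0 expr0n /= !mulr0.
  apply: ler_wpM2r; first by rewrite exprn_ge0 ?normr_ge0.
  have [a al da] := dlam k.
  have an : a != nth 0 lam 0.
    rewrite (lam_head he hr (one_in k)); apply: contra dk => /eqP a1.
    by rewrite da a1 rmorph1.
  have := lam_bound he al an => ha.
  rewrite da normCK conjCR -rmorphM lecR -expr2.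
  exact: sq_le.
have fin : ((\sum_k (W *m w) k 0 ^+ 2)%:C)%C <= (((rhoW m lam * vnorm w) ^+ 2)%:C)%C.
  rewrite -(hn_real (W *m w)) hn1; apply: (le_trans bnd).
  by rewrite hn2 hn_real -rmorphM exprMn vnorm_sq.
rewrite lecR in fin.
apply: vnorm_le => //; exact: mulr_ge0 r0 (vnorm_ge0 _).
Qed.

Local Close Scope sesquilinear_scope.
Unset Implicit Arguments.

Lemma specnorm_p0 (R : realType) p q (A : 'M[R]_(p, q)) : p = 0%N -> specnorm A <= 0.
Proof.
move=> p0; apply: le_trans (specnorm_Bd A) _.
rewrite /Bd big1 ?sqrtr0 // => i _; exfalso; have := ltn_ord i; move: (nat_of_ord i); by rewrite p0 => k; rewrite ltn0.
Qed.

Lemma one_le_sqrt (R : realType) k : (0 < k)%N -> 1 <= Num.sqrt (k%:R : R).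
Proof. by move=> k0; rewrite -{1}sqrtr1 ler_sqrt ?ler0n // ler1n. Qed.

Theorem proposition2 (R : realType) (m n l : nat)
  (adj : rel 'I_m) (W : 'M[R]_m) (lam : seq R)
  (Theta : 'M[R]_(l, n))
  (x mu : 'I_m -> nat -> 'cV[R]_n) (eta : 'I_m -> nat -> 'cV[R]_l)
  (y : 'I_m -> nat -> 'cV[R]_l)
  (sigma_x sigma_eta muhat deltahat : R) (T t : nat) :
  (* communication graph: undirected, connected *)
  (forall i j, adj i j = adj j i) ->
  (forall i j, fingraph.connect adj i j) ->
  (* weight matrix *)
  (forall i j, 0 <= W i j) ->
  (forall i j, i != j -> ~~ adj i j -> W i j = 0) ->
  W *m (const_mx 1 : 'cV[R]_m) = const_mx 1 ->
  W^T = W ->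
  ordered_eigs W lam ->
  rhoW m lam < 1 ->
  (* data model (realization) *)
  0 < sigma_x -> 0 < sigma_eta ->
  (forall i j, y i j = Theta *m x i j + eta i j) ->
  has_ubound [set vnorm (mu p.1 p.2) | p in [set p : 'I_m * nat | (0 < p.2)%N]] ->
  muhat = sup [set vnorm (mu p.1 p.2) | p in [set p : 'I_m * nat | (0 < p.2)%N]] ->
  (* parameters *)
  0 < deltahat -> (1 <= T)%N ->
  (t%:R >= 8 * n%:R + 16 * ln (2 / deltahat)) ->
  (t%:R >= (16 * muhat * (Num.sqrt (4 * n%:R) + Num.sqrt (2 * ln (2 / deltahat)))
             / sigma_x) ^+ 2) ->
  (t%:R >= 2 * (n + l)%:R * ln (1 / deltahat)) ->
  (* the event E_3 *)
  (forall i : 'I_m,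
     specnorm (\sum_(1 <= j < t.+1) x i j *m (x i j)^T)
       <= t%:R * (19 / 8 * sigma_x ^+ 2 + muhat ^+ 2)
   /\ lambda_min (\sum_(1 <= j < t.+1) x i j *m (x i j)^T)
       >= t%:R * sigma_x ^+ 2 / 8 *
          lambda_min (1%:M + (4 / (t%:R * sigma_x ^+ 2)) *:
                              \sum_(1 <= j < t.+1) mu i j *m (mu i j)^T)
   /\ specnorm (\sum_(1 <= j < t.+1) eta i j *m (x i j)^T)
       <= Num.sqrt t%:R * sigma_eta *
          (4 * sigma_x * Num.sqrt ((n + l)%:R * ln (9 / deltahat))
           + muhat * (Num.sqrt (2 * (l + n)%:R) + Num.sqrt (2 * ln (2 / deltahat))))) ->
  let alpha := fun i : 'I_m => \sum_(1 <= j < t.+1) y i j *m (x i j)^T in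
  let alphabar := (m%:R)^-1 *: \sum_(i < m) alpha i in
  let c1 := specnorm Theta * (19 / 8 * sigma_x ^+ 2 + muhat ^+ 2) in
  let c2 := sigma_eta *
          (4 * sigma_x * Num.sqrt ((n + l)%:R * ln (9 / deltahat))
           + muhat * (Num.sqrt (2 * (l + n)%:R) + Num.sqrt (2 * ln (2 / deltahat)))) in
  forall i : 'I_m,
    specnorm (consensus W alpha T i - alphabar)
      <= m%:R * Num.sqrt m%:R * Num.sqrt l%:R * rhoW m lam ^+ T
         * (t%:R * c1 + Num.sqrt t%:R * c2).
Proof.
move=> _ _ _ _ h1 hT he hr _ _ hy _ _ _ _ _ _ _ hE3 alpha alphabar c1 c2 i.
have r0 := rho_ge0 he.
have hc := spectral_contract h1 hT he hr.
pose K := t%:R * c1 + Num.sqrt t%:R * c2.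
have Ka : forall j, specnorm (alpha j) <= K.
  move=> j; have [hxx [_ hex]] := hE3 j.
  have -> : alpha j = Theta *m (\sum_(1 <= k < t.+1) x j k *m (x j k)^T)
                      + \sum_(1 <= k < t.+1) eta j k *m (x j k)^T.
    rewrite /alpha mulmx_sumr -big_split /=; apply: eq_bigr => k _.
    by rewrite hy mulmxDl mulmxA.
  apply: le_trans (specnormD _ _) _; apply: lerD.
    apply: le_trans (specnormM _ _) _.
    rewrite /c1 mulrCA; apply: ler_wpM2l; [exact: specnorm_ge0 | exact: hxx].
  by rewrite /c2 mulrA.
have K0 : 0 <= K := le_trans (specnorm_ge0 _) (Ka i).
have E : consensus W alpha T i - alphabar =
         \sum_j (powm W T i j - (m%:R)^-1) *: alpha j.
  rewrite consensusE /alphabar scaler_sumr -sumrB; apply: eq_bigr => j _.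
  by rewrite scalerBl.
rewrite E.
have [l0|lpos] := posnP l.
  apply: le_trans (@specnorm_p0 _ _ _ _ l0) _.
  by rewrite l0 sqrtr0 mulr0 mul0r mul0r.
apply: le_trans (specnorm_sum _) _.
apply: (@le_trans _ _ (\sum_(j < m) rhoW m lam ^+ T * K)).
  apply: ler_sum => j _; apply: le_trans (specnormZ _ _) _.
  apply: ler_pM; [exact: normr_ge0 | exact: specnorm_ge0 | | exact: Ka].
  exact: entry_bound.
rewrite sumr_const card_ord -[_ *+ m]mulr_natl.
have m0 : (0 < m)%N := leq_ltn_trans (leq0n i) (ltn_ord i).
have s1 : 1 <= Num.sqrt (m%:R : R) * Num.sqrt (l%:R : R).
  by rewrite mulr_ege1 // one_le_sqrt.
have X0 : 0 <= rhoW m lam ^+ T * K by rewrite mulr_ge0 // exprn_ge0.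
rewrite -/K.
have -> : m%:R * Num.sqrt m%:R * Num.sqrt l%:R * rhoW m lam ^+ T * K =
          m%:R * ((Num.sqrt m%:R * Num.sqrt l%:R) * (rhoW m lam ^+ T * K)) by ring.
rewrite ler_wpM2l //; rewrite -{1}[rhoW m lam ^+ T * K]mul1r.
exact: ler_wpM2r.
Qed.
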